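(* For every countable ordinal $\lambda<\omega_1$ there is a continuous map $g_\lambda:[0,1]\to[0,1]$ such that the chain components poset $(\mathfrak{C}_{g_\lambda},\preceq)$ is order isomorphic to $(\lambda+1,\ni)$, i.e. to the reverse of the usual order on the ordinal $\lambda+1$.
   Context: For a map $g:[0,1]\to[0,1]$ with the usual metric: an $\varepsilon$-chain from $x$ to $y$ is a finite sequence $x_0=x,\dots,x_n=y$, $n\ge1$, with $|g(x_i)-x_{i+1}|<\varepsilon$; $x\,\mathcal{C}\,y$ iff for every $\varepsilon>0$ there is an $\varepsilon$-chain from $x$ to $y$; $CR_g=\{x:x\,\mathcal{C}\,x\}$; $x\,E\,y$ iff $x\,\mathcal{C}\,y$ and $y\,\mathcal{C}\,x$; $\mathfrak{C}_g=CR_g/E$ is the set of chain components, partially ordered by $[x]\preceq[y]$ iff $y\,\mathcal{C}\,x$. *)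

(* Defs.v *)
From Stdlib Require Import Reals.
Open Scope R_scope.

Definition I01 (x : R) : Prop := 0 <= x <= 1.

Definition maps_unit (g : R -> R) : Prop := forall x, I01 x -> I01 (g x).

Definition continuous_on_unit (g : R -> R) : Prop :=
  forall x, I01 x -> forall eps, 0 < eps ->
    exists delta, 0 < delta /\
      forall y, I01 y -> Rabs (y - x) < delta -> Rabs (g y - g x) < eps.

Definition eps_chain (g : R -> R) (eps x y : R) : Prop :=
  exists (n : nat) (xs : nat -> R),
    (1 <= n)%nat /\ xs 0%nat = x /\ xs n = y /\
    (forall i, (i <= n)%nat -> I01 (xs i)) /\
    (forall i, (i < n)%nat -> Rabs (g (xs i) - xs (S i)) < eps).

Definition chain_rel (g : R -> R) (x y : R) : Prop :=
  forall eps, 0 < eps -> eps_chain g eps x y.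

Definition CR (g : R -> R) (x : R) : Prop := I01 x /\ chain_rel g x x.

Definition chainE (g : R -> R) (x y : R) : Prop := chain_rel g x y /\ chain_rel g y x.

(* Chain component order on CR_g/E: [x] ≼ [y] iff y C x. *)
Definition comp_le (g : R -> R) (x y : R) : Prop := chain_rel g y x.

(* Countable ordinals of the form lambda+1 (lambda < omega_1) are, up to
   isomorphism, exactly the countable (strict) well-orders with a greatest
   element. *)
Definition strict_well_order {T : Type} (lt : T -> T -> Prop) : Prop :=
  (forall a, ~ lt a a) /\
  (forall a b c, lt a b -> lt b c -> lt a c) /\
  (forall a b, lt a b \/ a = b \/ lt b a) /\
  well_founded lt.

Definition countable_type (T : Type) : Prop :=
  exists f : T -> nat, forall a b, f a = f b -> a = b.

Definition has_greatest {T : Type} (lt : T -> T -> Prop) : Prop :=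
  exists m : T, forall a, a <> m -> lt a m.

Definition ord_le {T : Type} (lt : T -> T -> Prop) (a b : T) : Prop := lt a b \/ a = b.

(* (CR_g/E, ≼) is order isomorphic to (T, ∋), the reverse of the ordinal order.
   Written out via the quotient map: phi : CR_g -> T is surjective onto T and
   [x] ≼ [y]  <->  phi y <= phi x  (i.e. phi x ∋ phi y or equal).
   Since ord_le is antisymmetric, phi x = phi y <-> x E y, so phi descends to a
   bijection CR_g/E -> T which is an order isomorphism, and conversely any such
   isomorphism composed with the quotient map yields such a phi. *)
Definition components_iso_reverse (g : R -> R) {T : Type} (lt : T -> T -> Prop) : Prop :=
  exists phi : R -> T,
    (forall t : T, exists x, CR g x /\ phi x = t) /\
    (forall x y, CR g x -> CR g y -> (comp_le g x y <-> ord_le lt (phi y) (phi x))).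

(* Main.v *)
Require Import Defs.
From Stdlib Require Import Reals Lra Lia Classical ClassicalEpsilon.
Open Scope R_scope.

Definition gmono (g : R -> R) := forall x y, I01 x -> I01 y -> x <= y -> g x <= g y.
Definition gge (g : R -> R) := forall x, I01 x -> x <= g x.

Lemma trap g : gmono g -> gge g -> forall z x y, I01 z -> z < g z -> z <= x ->
  eps_chain g ((g z - z)/2) x y -> z < y.
Proof.
  intros Hm Hg z x y Iz Hz Hx [n [xs [Hn [H0 [Hn' [HI Hs]]]]]].
  assert (A : forall i, (i < n)%nat -> z <= xs i -> z < xs (S i)).
  { intros i Hi Hzi. specialize (Hs i Hi). apply Rabs_def2 in Hs.
    assert (g z <= g (xs i)) by (apply Hm; auto; apply HI; lia). lra. }
  assert (B : forall i, (i <= n)%nat -> z <= xs i).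
  { induction i; intros Hi. rewrite H0; lra. left. apply A. lia. apply IHi. lia. }
  destruct n as [|n']. lia. rewrite <- Hn'. apply A. lia. apply B. lia.
Qed.

Lemma CR_fixed g : gmono g -> gge g -> forall x, CR g x -> g x = x.
Proof.
  intros Hm Hg x [Ix Hc]. destruct (Rle_lt_or_eq_dec _ _ (Hg x Ix)) as [Hlt|Heq]; [|auto].
  exfalso.
  pose proof (trap g Hm Hg x x x Ix Hlt (Rle_refl x) (Hc ((g x - x)/2) ltac:(lra))). lra.
Qed.

Lemma no_chain_down g : gmono g -> gge g -> forall z x y, I01 z -> z < g z -> z <= x -> y <= z ->
  ~ chain_rel g x y.
Proof. intros Hm Hg z x y Iz Hz Hx Hy Hc.
  pose proof (trap g Hm Hg z x y Iz Hz Hx (Hc ((g z - z)/2) ltac:(lra))). lra. Qed.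

Fixpoint upseq (g : R -> R) (x y h : R) (n : nat) : R :=
  match n with O => x | S k => Rmin y (g (upseq g x y h k) + h) end.

Lemma chain_up g : gmono g -> gge g -> forall x y, I01 x -> I01 y -> x <= y -> g y = y ->
  chain_rel g x y.
Proof.
  intros Hm Hg x y Ix Iy Hxy Hy eps He.
  set (h := eps/2).
  assert (Hh : 0 < h /\ h < eps) by (unfold h; lra).
  assert (Inv : forall i, x <= upseq g x y h i <= y).
  { induction i; simpl. lra.
    assert (I01 (upseq g x y h i)) by (unfold I01 in *; lra).
    pose proof (Hg _ H). unfold Rmin; destruct (Rle_dec _ _); lra. }
  assert (Prog : forall i, Rmin y (x + INR i * h) <= upseq g x y h i).
  { induction i.
    - simpl. unfold Rmin; destruct (Rle_dec _ _); lra.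
    - rewrite S_INR, Rmult_plus_distr_r, Rmult_1_l. simpl upseq.
      pose proof (Inv i) as Hi.
      set (k := INR i * h) in *. set (s := upseq g x y h i) in *.
      assert (I01 s) by (unfold I01 in *; lra).
      pose proof (Hg _ H).
      revert IHi. unfold Rmin; repeat destruct (Rle_dec _ _); lra. }
  destruct (INR_archimed h (y - x)) as [n0 Hn0]. lra.
  exists (S n0), (upseq g x y h).
  split. lia. split. reflexivity. split.
  { apply Rle_antisym. apply Inv. eapply Rle_trans; [|apply Prog].
    rewrite S_INR. assert (0 < h) by (unfold h; lra).
    unfold Rmin; destruct (Rle_dec _ _); nra. }
  split.
  { intros i _. pose proof (Inv i). unfold I01 in *; lra. }
  intros i _. simpl upseq. set (s := upseq g x y h i).
  pose proof (Inv i) as Hi. fold s in Hi.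
  assert (I01 s) by (unfold I01 in *; lra).
  pose proof (Hg _ H). assert (g s <= y) by (rewrite <- Hy; apply Hm; auto; apply Inv).
  unfold Rmin; destruct (Rle_dec _ _); apply Rabs_def1; lra.
Qed.
Definition ind (A : nat -> Prop) (k : nat) : R :=
  if excluded_middle_informative (A k) then 1 else 0.

Fixpoint Psum (A : nat -> Prop) (N : nat) : R :=
  match N with O => 0 | S n => Psum A n + ind A n * (/2)^(S n) end.

Lemma Psum_S A n : Psum A (S n) = Psum A n + ind A n * (/2)^(S n).
Proof. reflexivity. Qed.

Lemma ind_bounds A k : 0 <= ind A k <= 1.
Proof. unfold ind; destruct (excluded_middle_informative _); lra. Qed.
Lemma ind_true A k : A k -> ind A k = 1.
Proof. unfold ind; destruct (excluded_middle_informative _); tauto. Qed.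
Lemma ind_false A k : ~ A k -> ind A k = 0.
Proof. unfold ind; destruct (excluded_middle_informative _); tauto. Qed.
Lemma ind_le (A B : nat -> Prop) k : (A k -> B k) -> ind A k <= ind B k.
Proof. intros H. unfold ind; do 2 destruct (excluded_middle_informative _); try lra; tauto. Qed.
Lemma ph_pos n : 0 < (/2)^n.
Proof. apply pow_lt; lra. Qed.
Lemma ph_S n : (/2)^(S n) = (/2)^n / 2.
Proof. simpl; field. Qed.

Lemma term_bounds A n : 0 <= ind A n * (/2)^(S n) <= (/2)^(S n).
Proof. pose proof (ind_bounds A n). pose proof (ph_pos (S n)). nra. Qed.

Lemma Psum_mono A N M : (N <= M)%nat -> Psum A N <= Psum A M.
Proof. induction 1. lra. rewrite Psum_S. pose proof (term_bounds A m). lra. Qed.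

Lemma Psum_nonneg A N : 0 <= Psum A N.
Proof. apply (Psum_mono A 0 N); lia. Qed.

Lemma Psum_tail A N M : (N <= M)%nat -> Psum A M <= Psum A N + (/2)^N - (/2)^M.
Proof. induction 1. lra. rewrite Psum_S. pose proof (term_bounds A m). rewrite ph_S in *. lra. Qed.

Lemma Psum_sub (A B : nat -> Prop) N : (forall k, (k < N)%nat -> A k -> B k) -> Psum A N <= Psum B N.
Proof.
  induction N; intros H. simpl; lra. rewrite !Psum_S.
  pose proof (ind_le A B N (H N ltac:(lia))). pose proof (ph_pos (S N)).
  assert (Psum A N <= Psum B N) by (apply IHN; intros; apply H; auto; lia).
  nra.
Qed.

Lemma Psum_strict (A B : nat -> Prop) j : (forall k, A k -> B k) -> B j -> ~ A j ->
  forall N, (j < N)%nat -> Psum A N + (/2)^(S j) <= Psum B N.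
Proof.
  intros Hs Hb Ha. induction N; intros Hj. lia. rewrite !Psum_S.
  pose proof (ph_pos (S N)).
  destruct (Nat.eq_dec j N) as [->|Hne].
  - rewrite (ind_true B N Hb), (ind_false A N Ha).
    pose proof (Psum_sub A B N (fun k _ => Hs k)). lra.
  - pose proof (ind_le A B N (Hs N)). assert (j < N)%nat by lia. specialize (IHN H1). nra.
Qed.

Lemma Psum_le1 A N : Psum A N <= 1.
Proof. pose proof (Psum_tail A 0 N ltac:(lia)). pose proof (ph_pos N). simpl in H. lra. Qed.

Definition Pset A := fun r => exists N, r = Psum A N.
Lemma Pset_bound A : bound (Pset A).
Proof. exists 1. intros r [N ->]. apply Psum_le1. Qed.
Lemma Pset_ne A : exists r, Pset A r.
Proof. exists 0, 0%nat. reflexivity. Qed.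
Definition esum A := proj1_sig (completeness (Pset A) (Pset_bound A) (Pset_ne A)).
Lemma esum_spec A : is_lub (Pset A) (esum A).
Proof. unfold esum. destruct (completeness _ _ _). auto. Qed.

Lemma esum_ge A N : Psum A N <= esum A.
Proof. apply (proj1 (esum_spec A)). exists N; auto. Qed.

Lemma esum_tail A N : esum A <= Psum A N + (/2)^N.
Proof.
  apply (proj2 (esum_spec A)). intros r [M ->].
  destruct (Compare_dec.le_lt_dec N M).
  - pose proof (Psum_tail A N M l). pose proof (ph_pos M). lra.
  - pose proof (Psum_mono A M N ltac:(lia)). pose proof (ph_pos N). lra.
Qed.

Lemma esum_bounds A : 0 <= esum A <= 1.
Proof. pose proof (esum_ge A 0). pose proof (esum_tail A 0). simpl in *. lra. Qed.

Lemma esum_strict (A B : nat -> Prop) j : (forall k, A k -> B k) -> B j -> ~ A j ->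
  esum A + (/2)^(S j) <= esum B.
Proof.
  intros Hs Hb Ha.
  assert (esum A <= esum B - (/2)^(S j)); [|lra].
  apply (proj2 (esum_spec A)). intros r [N ->].
  pose proof (Psum_mono A N (Nat.max N (S j)) ltac:(lia)).
  pose proof (Psum_strict A B j Hs Hb Ha (Nat.max N (S j)) ltac:(lia)).
  pose proof (esum_ge B (Nat.max N (S j))). lra.
Qed.
Definition dset {T} (h : T -> R) x := fun r => exists t, r = - Rabs (x - h t).
Lemma dset_bound {T} (h : T -> R) x : bound (dset h x).
Proof. exists 0. intros r [t ->]. pose proof (Rabs_pos (x - h t)). lra. Qed.
Lemma dset_ne {T} (h : T -> R) (m : T) x : exists r, dset h x r.
Proof. exists (- Rabs (x - h m)), m. reflexivity. Qed.
Definition dd {T} (h : T -> R) (m : T) x :=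
  - proj1_sig (completeness (dset h x) (dset_bound h x) (dset_ne h m x)).
Lemma dd_spec {T} (h : T -> R) m x : is_lub (dset h x) (- dd h m x).
Proof. unfold dd. destruct (completeness _ _ _). simpl. rewrite Ropp_involutive. auto. Qed.
Lemma dd_le {T} (h : T -> R) m x t : dd h m x <= Rabs (x - h t).
Proof. pose proof (proj1 (dd_spec h m x) (- Rabs (x - h t)) (ex_intro _ t eq_refl)). lra. Qed.
Lemma dd_ge {T} (h : T -> R) m x d : (forall t, d <= Rabs (x - h t)) -> d <= dd h m x.
Proof.
  intros H. assert (- dd h m x <= - d); [|lra].
  apply (proj2 (dd_spec h m x)). intros r [t ->]. specialize (H t). lra.
Qed.
Lemma dd_nonneg {T} (h : T -> R) m x : 0 <= dd h m x.
Proof. apply dd_ge. intros; apply Rabs_pos. Qed.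
Lemma dd_lip {T} (h : T -> R) m x y : dd h m x - Rabs (x - y) <= dd h m y.
Proof.
  apply dd_ge. intros t. pose proof (dd_le h m x t).
  pose proof (Rabs_triang (x - y) (y - h t)).
  replace (x - y + (y - h t)) with (x - h t) in H0 by ring. lra.
Qed.

Definition gfun {T} (h : T -> R) (m : T) x := x + dd h m x / 2.

Lemma gfun_mono {T} (h : T -> R) m : gmono (gfun h m).
Proof.
  intros x y _ _ Hxy. unfold gfun. pose proof (dd_lip h m x y).
  rewrite Rabs_minus_sym, Rabs_right in H by lra. lra.
Qed.
Lemma gfun_ge {T} (h : T -> R) m : gge (gfun h m).
Proof. intros x _. unfold gfun. pose proof (dd_nonneg h m x). lra. Qed.
Lemma gfun_maps {T} (h : T -> R) m : h m = 1 -> maps_unit (gfun h m).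
Proof.
  intros Hm x [H0 H1]. unfold gfun. pose proof (dd_nonneg h m x). pose proof (dd_le h m x m).
  rewrite Hm, Rabs_left1 in H2 by lra. split; lra.
Qed.
Lemma gfun_cont {T} (h : T -> R) m : continuous_on_unit (gfun h m).
Proof.
  intros x _ eps He. exists (eps/2). split. lra. intros y _ Hy.
  pose proof (dd_lip h m x y). pose proof (dd_lip h m y x).
  rewrite Rabs_minus_sym in H. pose proof (Rabs_def2 _ _ Hy). unfold gfun.
  apply Rabs_def1; lra.
Qed.
Lemma gfun_fix_iff {T} (h : T -> R) m x : gfun h m x = x <-> dd h m x = 0.
Proof. unfold gfun. split; intros; lra. Qed.
Lemma dd_zero {T} (h : T -> R) m t : dd h m (h t) = 0.
Proof. pose proof (dd_le h m (h t) t). pose proof (dd_nonneg h m (h t)).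
  rewrite Rminus_diag, Rabs_R0 in H. lra. Qed.

Definition Aset {T} (lt : T -> T -> Prop) (f : T -> nat) t k := exists s, lt s t /\ f s = k.
Definition ee {T} lt (f : T -> nat) t := esum (Aset lt f t).
Definition eh {T} lt (f : T -> nat) (m : T) t := ee lt f t + 1 - ee lt f m.

Lemma Aset_mono {T} (lt : T -> T -> Prop) f :
  (forall a b c, lt a b -> lt b c -> lt a c) ->
  forall s t k, lt s t -> Aset lt f s k -> Aset lt f t k.
Proof. intros tr s t k H [r [Hr Hf]]. exists r; split; eauto. Qed.

Lemma ee_strict {T} (lt : T -> T -> Prop) f :
  (forall a, ~ lt a a) -> (forall a b c, lt a b -> lt b c -> lt a c) ->
  (forall a b, f a = f b -> a = b) ->
  forall s t, lt s t -> ee lt f s + (/2)^(S (f s)) <= ee lt f t.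
Proof.
  intros irr tr inj s t H. apply esum_strict.
  - intros k. apply Aset_mono; auto.
  - exists s; auto.
  - intros [r [Hr Hf]]. rewrite (inj r s Hf) in Hr. exact (irr s Hr).
Qed.

Lemma wf_least {T} (lt : T -> T -> Prop) : well_founded lt ->
  forall P : T -> Prop, (exists x, P x) -> exists x, P x /\ forall y, lt y x -> ~ P y.
Proof.
  intros wf P [x Hx]. apply NNPP; intro H.
  apply (well_founded_ind wf (fun x => ~ P x)) with x; [|exact Hx].
  intros z IH Pz. apply H. exists z. split; auto.
Qed.

Lemma approx {T} (lt : T -> T -> Prop) f :
  (forall a b c, lt a b -> lt b c -> lt a c) -> (forall a b, lt a b \/ a = b \/ lt b a) ->
  forall t0, (exists s0, lt s0 t0) -> (forall r, lt r t0 -> exists r', lt r r' /\ lt r' t0) ->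
  forall N, exists s, lt s t0 /\ forall k, (k < N)%nat -> Aset lt f t0 k -> Aset lt f s k.
Proof.
  intros tr tri t0 [s0 Hs0] Hnm. induction N.
  - exists s0. split; auto. intros; lia.
  - destruct IHN as [s [Hs Hk]].
    destruct (classic (Aset lt f t0 N)) as [[r [Hr Hfr]] | Hn].
    + assert (exists u, (lt s u \/ s = u) /\ (lt r u \/ r = u) /\ lt u t0) as [u [Hsu [Hru Hu]]].
      { destruct (tri s r) as [H|[H|H]].
        - exists r; auto.
        - exists s; subst; auto.
        - exists s; auto. }
      destruct (Hnm u Hu) as [r' [Hur' Hr't0]].
      assert (lt s r') by (destruct Hsu; [eauto | subst; auto]).
      assert (lt r r') by (destruct Hru; [eauto | subst; auto]).
      exists r'. split; auto. intros k Hk' Ha.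
      destruct (Nat.eq_dec k N) as [->|Hne].
      * exists r; auto.
      * apply (Aset_mono lt f tr s r'); auto. apply Hk; auto. lia.
    + exists s. split; auto. intros k Hk' Ha.
      destruct (Nat.eq_dec k N) as [->|Hne]. contradiction. apply Hk; auto. lia.
Qed.

Lemma ee_approx {T} (lt : T -> T -> Prop) f :
  (forall a b c, lt a b -> lt b c -> lt a c) -> (forall a b, lt a b \/ a = b \/ lt b a) ->
  forall t0, (exists s0, lt s0 t0) -> (forall r, lt r t0 -> exists r', lt r r' /\ lt r' t0) ->
  forall N, exists s, lt s t0 /\ ee lt f t0 <= ee lt f s + (/2)^N.
Proof.
  intros tr tri t0 H1 H2 N. destruct (approx lt f tr tri t0 H1 H2 N) as [s [Hs Hk]].
  exists s. split; auto. unfold ee.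
  pose proof (esum_tail (Aset lt f t0) N). pose proof (Psum_sub _ _ N Hk).
  pose proof (esum_ge (Aset lt f s) N). lra.
Qed.


Lemma eh_lt {T} (lt : T -> T -> Prop) f m :
  (forall a, ~ lt a a) -> (forall a b c, lt a b -> lt b c -> lt a c) ->
  (forall a b, f a = f b -> a = b) ->
  forall s t, lt s t -> eh lt f m s < eh lt f m t.
Proof.
  intros irr tr inj s t H. pose proof (ee_strict lt f irr tr inj s t H).
  pose proof (ph_pos (S (f s))). unfold eh. lra.
Qed.

Lemma eh_le {T} (lt : T -> T -> Prop) f m :
  (forall a, ~ lt a a) -> (forall a b c, lt a b -> lt b c -> lt a c) ->
  (forall a b, lt a b \/ a = b \/ lt b a) ->
  (forall a b, f a = f b -> a = b) ->
  forall s t, ~ lt t s -> eh lt f m s <= eh lt f m t.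
Proof.
  intros irr tr tri inj s t H. destruct (tri s t) as [H1|[H1|H1]].
  - left; apply eh_lt; auto.
  - subst; lra.
  - contradiction.
Qed.

Lemma eh_m {T} (lt : T -> T -> Prop) f m : eh lt f m m = 1.
Proof. unfold eh; ring. Qed.

Lemma half_small d : 0 < d -> exists N, (/2)^N < d.
Proof.
  intros Hd. destruct (pow_lt_1_zero (/2) ltac:(rewrite Rabs_right; lra) d Hd) as [N HN].
  exists N. specialize (HN N (le_n N)). rewrite Rabs_right in HN; auto.
  left; apply ph_pos.
Qed.

Lemma abs_ge1 a b : a - b <= Rabs (a - b).
Proof. apply Rle_abs. Qed.
Lemma abs_ge2 a b : b - a <= Rabs (a - b).
Proof. rewrite Rabs_minus_sym. apply Rle_abs. Qed.

Lemma closed_lemma {T} (lt : T -> T -> Prop) f m :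
  (forall a, ~ lt a a) -> (forall a b c, lt a b -> lt b c -> lt a c) ->
  (forall a b, lt a b \/ a = b \/ lt b a) -> well_founded lt ->
  (forall a b, f a = f b -> a = b) ->
  forall x, x <= 1 -> (forall t, eh lt f m t <> x) ->
  exists d, 0 < d /\ forall t, d <= Rabs (x - eh lt f m t).
Proof.
  intros irr tr tri wf inj x Hx Hne.
  destruct (wf_least lt wf (fun t => x <= eh lt f m t)) as [t0 [H0 Hmin]].
  { exists m. rewrite eh_m; auto. }
  assert (Hgt : x < eh lt f m t0) by (destruct H0; auto; exfalso; apply (Hne t0); auto).
  destruct (classic (exists p, lt p t0 /\ forall r, lt r t0 -> ~ lt p r)) as [[p [Hp Hpmax]] | Hno].
  - assert (Hpx : eh lt f m p < x) by (apply Rnot_le_lt; apply Hmin; auto).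
    exists (Rmin (eh lt f m t0 - x) (x - eh lt f m p)). split.
    { apply Rmin_glb_lt; lra. }
    intros t. destruct (tri t t0) as [Hl|[He|Hg]].
    + assert (eh lt f m t <= eh lt f m p).
      { destruct (tri t p) as [H1|[H1|H1]].
        - left; apply eh_lt; auto.
        - subst; lra.
        - exfalso; exact (Hpmax t Hl H1). }
      pose proof (Rmin_r (eh lt f m t0 - x) (x - eh lt f m p)).
      pose proof (abs_ge1 x (eh lt f m t)). lra.
    + subst. pose proof (Rmin_l (eh lt f m t0 - x) (x - eh lt f m p)).
      pose proof (abs_ge2 x (eh lt f m t0)). lra.
    + pose proof (eh_lt lt f m irr tr inj t0 t Hg).
      pose proof (Rmin_l (eh lt f m t0 - x) (x - eh lt f m p)).
      pose proof (abs_ge2 x (eh lt f m t)). lra.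
  - exists (eh lt f m t0 - x). split. lra.
    intros t. destruct (tri t t0) as [Hl|[He|Hg]].
    + exfalso.
      assert (Hnm : forall r, lt r t0 -> exists r', lt r r' /\ lt r' t0).
      { intros r Hr. apply NNPP; intro Hn. apply Hno. exists r. split; auto.
        intros r' Hr' Hrr'. apply Hn. eauto. }
      destruct (half_small (eh lt f m t0 - x)) as [N HN]. lra.
      destruct (ee_approx lt f tr tri t0 (ex_intro _ t Hl) Hnm N) as [s [Hs Hes]].
      apply (Hmin s Hs). unfold eh in *. lra.
    + subst. pose proof (abs_ge2 x (eh lt f m t0)). lra.
    + pose proof (eh_lt lt f m irr tr inj t0 t Hg).
      pose proof (abs_ge2 x (eh lt f m t)). lra.
Qed.

Lemma gap_lemma {T} (lt : T -> T -> Prop) f m :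
  (forall a, ~ lt a a) -> (forall a b c, lt a b -> lt b c -> lt a c) ->
  (forall a b, lt a b \/ a = b \/ lt b a) -> well_founded lt ->
  (forall a b, f a = f b -> a = b) ->
  forall s t, lt s t -> exists z, eh lt f m s < z /\ z < eh lt f m t /\ forall r, eh lt f m r <> z.
Proof.
  intros irr tr tri wf inj s t Hst.
  destruct (wf_least lt wf (fun u => lt s u) (ex_intro _ t Hst)) as [u [Hu Hmin]].
  assert (eh lt f m u <= eh lt f m t) by (apply eh_le; auto; intro H; exact (Hmin t H Hst)).
  pose proof (eh_lt lt f m irr tr inj s u Hu).
  exists ((eh lt f m s + eh lt f m u)/2). split. lra. split. lra.
  intros r Hr.
  destruct (tri r s) as [H1|[H1|H1]].
  - pose proof (eh_lt lt f m irr tr inj r s H1). lra.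
  - subst. lra.
  - destruct (tri r u) as [H2|[H2|H2]].
    + exact (Hmin r H2 H1).
    + subst. lra.
    + pose proof (eh_lt lt f m irr tr inj u r H2). lra.
Qed.

Theorem corollary2p4 :
  forall (T : Type) (lt : T -> T -> Prop),
    strict_well_order lt -> countable_type T -> has_greatest lt ->
    exists g : R -> R,
      maps_unit g /\ continuous_on_unit g /\ components_iso_reverse g lt.
Proof.
  intros T lt [irr [tr [tri wf]]] [f inj] [m Hm].
  set (h := eh lt f m).
  assert (Hhm : h m = 1) by apply eh_m.
  assert (Hb : forall t, I01 (h t)).
  { intros t. unfold h. pose proof (esum_bounds (Aset lt f t)). pose proof (esum_bounds (Aset lt f m)).
    assert (eh lt f m t <= eh lt f m m).
    { apply eh_le; auto. intros Hmt. assert (t <> m) by (intro; subst; exact (irr m Hmt)).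
      exact (irr m (tr _ _ _ Hmt (Hm t H1))). }
    rewrite eh_m in H1. unfold eh, ee in *. split; lra. }
  assert (Hinj : forall a b, h a = h b -> a = b).
  { intros a b Hab. destruct (tri a b) as [H|[H|H]]; auto; exfalso.
    - pose proof (eh_lt lt f m irr tr inj a b H). unfold h in Hab. lra.
    - pose proof (eh_lt lt f m irr tr inj b a H). unfold h in Hab. lra. }
  set (g := gfun h m).
  assert (Hfix : forall t, g (h t) = h t).
  { intros t. apply gfun_fix_iff. apply dd_zero. }
  assert (HE : forall x, I01 x -> g x = x -> exists t, h t = x).
  { intros x Ix Hx. apply NNPP; intro Hn.
    destruct (closed_lemma lt f m irr tr tri wf inj x (proj2 Ix)) as [d [Hd Hdd]].
    { intros t Ht. apply Hn. exists t; auto. }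
    pose proof (dd_ge h m x d Hdd). apply gfun_fix_iff in Hx. fold h in H. lra. }
  exists g. split. apply gfun_maps; auto. split. apply gfun_cont.
  set (phi := fun x => epsilon (inhabits m) (fun t => h t = x)).
  assert (Hphi : forall t, phi (h t) = t).
  { intros t. apply Hinj. apply (epsilon_spec (inhabits m) (fun s => h s = h t)). exists t; auto. }
  assert (Hmono := gfun_mono h m). assert (Hge := gfun_ge h m). fold g in Hmono, Hge.
  exists phi. split.
  - intros t. exists (h t). split; auto. split; auto.
    apply chain_up; auto. lra.
  - intros x y Cx Cy.
    pose proof (CR_fixed g Hmono Hge x Cx) as Fx. pose proof (CR_fixed g Hmono Hge y Cy) as Fy.
    destruct (HE x (proj1 Cx) Fx) as [a Ha]. destruct (HE y (proj1 Cy) Fy) as [b Hb'].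
    subst x y. rewrite !Hphi. unfold comp_le, ord_le. split.
    + intros Hc. destruct (tri a b) as [H|[H|H]]; [exfalso | right; auto | left; auto].
      destruct (gap_lemma lt f m irr tr tri wf inj a b H) as [z [Hz1 [Hz2 Hz3]]].
      fold h in Hz1, Hz2, Hz3.
      assert (Iz : I01 z) by (pose proof (Hb a); pose proof (Hb b); unfold I01 in *; lra).
      assert (Hgz : z < g z).
      { destruct (Rle_lt_or_eq_dec _ _ (Hge z Iz)) as [Hl|He]; auto.
        destruct (HE z Iz (eq_sym He)) as [t Ht]. exfalso; exact (Hz3 t Ht). }
      apply (no_chain_down g Hmono Hge z (h b) (h a) Iz Hgz); auto; lra.
    + intros Ho. apply chain_up; auto.
      destruct Ho as [Ho|Ho]. left; apply eh_lt; auto. subst; lra.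
Qed.
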